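(* Let $(u^k)$ be the iteration sequence defined by Algorithm 2 below, and suppose that at step $k$ one has $\delta^k>0$. Then $\lambda(u^{k+1})>\lambda(u^k)$.
   Context: $T,G:\mathbb{R}^n\to\mathbb{R}^n$ are continuously differentiable; $S\subset\mathbb{R}^n$ is open with $\langle G(u),\psi\rangle>0$ for all $u\in S$ and all nonzero $\psi$ with nonnegative entries. For $u\in S$: $f_i(u)=T_i(u)/G_i(u)$, $\lambda(u)=\min_i f_i(u)$, $N_\varepsilon(u)=\{i: f_i(u)-\lambda(u)<\varepsilon\}$. For $M=\{i_1<\dots<i_m\}$, $\mathcal{A}_M(u)$ is the $n\times m$ matrix with columns $\nabla f_{i_1}(u),\dots,\nabla f_{i_m}(u)$ and $\Gamma_M(u)=\mathcal{A}_M(u)^T\mathcal{A}_M(u)$. Algorithm 2 (parameters $\varepsilon,\delta>0$, start $u_0\in S$): for $k=0,1,2,\dots$: compute $\lambda(u^k)$ and $N_\varepsilon(u^k)=\{i_1<\dots<i_N\}$; solve the linear system $\Gamma_{N_\varepsilon(u^k)}(u^k)\alpha^k=\delta^k(1,\dots,1)^T$, $\sum_{j=1}^N\alpha^k_j=1$ for $(\alpha^k,\delta^k)\in\mathbb{R}^N\times\mathbb{R}$; if $\delta^k<\delta$ and $N=n$, stop; otherwise set $Y^k=\sum_{j=1}^N\alpha^k_j\nabla f_{i_j}(u^k)$, $y^k=Y^k/\|Y^k\|$, take the step length $\tau^k\ge0$ to be a maximizer (computed by golden section search) of $\kappa(\tau)=\lambda(u^k+\tau y^k)$ over $\tau\ge0$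 with $u^k+\tau y^k\in S$, and set $u^{k+1}=u^k+\tau^ky^k$. *)

(* Defs.v *)
From HB Require Import structures.
From mathcomp Require Import all_boot all_order all_algebra.
From mathcomp Require Import all_classical all_reals all_analysis.
Set Implicit Arguments. Unset Strict Implicit. Unset Printing Implicit Defensive.
Import Order.TTheory GRing.Theory Num.Theory.
Import numFieldNormedType.Exports.
Local Open Scope classical_set_scope.
Local Open Scope ring_scope.

Section Alg2.
Variables (R : realType) (n : nat).
Notation vec := 'rV[R]_n.

Definition dotv (a b : vec) : R := \sum_(i < n) a 0 i * b 0 i.
Definition enorm (a : vec) : R := Num.sqrt (dotv a a).

Definition fi (T G : vec -> vec) (i : 'I_n) (u : vec) : R := T u 0 i / G u 0 i.

Definition grad (g : vec -> R) (u : vec) : vec :=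
  \row_(j < n) ('D_(delta_mx 0 j) g u).

(* lambda(u) = min_i f_i(u)  (the default value only matters when n = 0) *)
Definition lam (T G : vec -> vec) (u : vec) : R :=
  \big[Num.min/head 0 [seq fi T G i u | i <- enum 'I_n]]_(i < n) fi T G i u.

Definition Neps (T G : vec -> vec) (eps : R) (u : vec) : {set 'I_n} :=
  [set i | fi T G i u - lam T G u < eps].

(* A_M(u): n x |M| matrix whose j-th column is grad f_{i_j}(u), i_1 < ... < i_N *)
Definition Amat (T G : vec -> vec) (M : {set 'I_n}) (u : vec) : 'M[R]_(n, #|M|) :=
  \matrix_(r < n, j < #|M|) grad (fi T G (enum_val j)) u 0 r.

Definition Gam (T G : vec -> vec) (M : {set 'I_n}) (u : vec) : 'M[R]_(#|M|) :=
  (Amat T G M u)^T *m Amat T G M u.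

(* One (non-stopping) iteration of Algorithm 2 from u to u', with the
   computed solution (alpha, dk) of the linear system and step length tau. *)
Definition alg2_step (T G : vec -> vec) (S : set vec) (eps delta : R)
    (u : vec) (alpha : 'cV[R]_(#|Neps T G eps u|)) (dk tau : R) (u' : vec) : Prop :=
  let M := Neps T G eps u in
  let Y : vec := (Amat T G M u *m alpha)^T in
  let y : vec := (enorm Y)^-1 *: Y in
  [/\ Gam T G M u *m alpha = dk *: const_mx 1,
      \sum_(j < #|M|) alpha j 0 = 1,
      ~ (dk < delta /\ #|M| = n),
      (0 <= tau /\ S (u + tau *: y) /\
      (forall t : R, 0 <= t -> S (u + t *: y) ->
         lam T G (u + t *: y) <= lam T G (u + tau *: y)))
    & u' = u + tau *: y].

Definition C1 (F : vec -> vec) : Prop :=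
  (forall x, differentiable F x) /\ (forall h : vec, continuous (fun x => 'd F x h)).

End Alg2.

Arguments alg2_step {R n} T G S eps delta u alpha dk tau u'.
Arguments Neps {R n} T G eps u.
Arguments lam {R n} T G u.
Arguments Amat {R n} T G M u.
Arguments Gam {R n} T G M u.
Arguments fi {R n} T G i u.

(* Main.v *)
Require Import Defs.
From HB Require Import structures.
From mathcomp Require Import all_boot all_order all_algebra.
From mathcomp Require Import all_classical all_reals all_analysis.
Import Order.TTheory GRing.Theory Num.Theory.
Import numFieldNormedType.Exports.
Local Open Scope classical_set_scope.
Local Open Scope ring_scope.

Section Helpers.
Variable R : realType.

Lemma bigmin_le_seq (I : eqType) (s : seq I) (F : I -> R) x i :
  i \in s -> \big[Num.min/x]_(j <- s) F j <= F i.
Proof.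
elim: s => //= a s IH; rewrite inE big_cons => /orP[/eqP->|/IH H].
  by rewrite ge_min lexx.
by rewrite ge_min H orbT.
Qed.

Lemma bigmin_ind_seq (I : eqType) (s : seq I) (F : I -> R) x (P : R -> Prop) :
  P x -> (forall i, P (F i)) -> P (\big[Num.min/x]_(j <- s) F j).
Proof.
move=> Px PF; elim: s => [|a s IH]; first by rewrite big_nil.
rewrite big_cons; case: (leP (F a) (\big[Num.min/x]_(j <- s) F j)) => _ //.
Qed.

Variable n : nat.
Implicit Types (T G : 'rV[R]_n -> 'rV[R]_n) (u : 'rV[R]_n).

Lemma head_idx T G u : (0 < n)%N ->
  exists i, head 0 [seq fi T G i u | i <- enum 'I_n] = fi T G i u.
Proof.
move=> n0.
have gen : forall s : seq 'I_n, size s = n ->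
  exists i, head 0 [seq fi T G i u | i <- s] = fi T G i u.
  case=> [|a s] /=; first by move=> e; rewrite -e in n0.
  by move=> _; exists a.
by apply: gen; rewrite size_enum_ord.
Qed.

Lemma lam_le T G u i : lam T G u <= fi T G i u.
Proof.
exact: (@bigmin_le_seq _ (index_enum 'I_n) (fun i => fi T G i u)
  (head 0 [seq fi T G i u | i <- enum 'I_n]) i (mem_index_enum _)).
Qed.

Lemma lam_attained T G u : (0 < n)%N -> exists i, lam T G u = fi T G i u.
Proof.
move=> n0; rewrite /lam.
apply: (@bigmin_ind_seq _ (index_enum 'I_n) (fun i => fi T G i u)
  (head 0 [seq fi T G i u | i <- enum 'I_n])
  (fun x => exists i, x = fi T G i u)) => [|i]; last by exists i.
exact: head_idx.
Qed.

Lemma lam_gt T G u c : (0 < n)%N -> (forall i, c < fi T G i u) -> c < lam T G u.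
Proof.
move=> n0 H; rewrite /lam.
apply: (@bigmin_ind_seq _ (index_enum 'I_n) (fun i => fi T G i u)
  (head 0 [seq fi T G i u | i <- enum 'I_n]) (fun x => c < x)) => //.
by have [i ->] := head_idx T G u n0.
Qed.

Lemma aff (y u : 'rV[R]_n) : (fun h : R => h *: y + u) @ nbhs (0:R) --> u.
Proof.
have := cvgD (cvgZ (@cvg_id _ (nbhs (0:R))) (cvg_cst y)) (cvg_cst u).
by rewrite scale0r add0r; apply; apply: nbhs_filter.
Qed.

Lemma der (f : 'rV[R]_n -> R) u y : derivable f u y ->
  (fun h : R => h^-1 *: (f (h *: y + u) - f u)) @ 0^' --> 'D_y f u.
Proof. move=> H. exact: H. Qed.

Lemma deriv_dot (f : 'rV[R]_n -> R) u y : differentiable f u ->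
  'D_y f u = dotv y (grad f u).
Proof.
move=> df; rewrite deriveE // {1}(row_sum_delta y) linear_sum /dotv.
apply: eq_bigr => j _; rewrite linearZ /= mxE -deriveE //.
Qed.

End Helpers.

Theorem proposition3 (R : realType) (n : nat) (T G : 'rV[R]_n -> 'rV[R]_n)
  (S : set 'rV[R]_n) (eps delta : R) (useq : nat -> 'rV[R]_n) (k : nat)
  (alpha : 'cV[R]_(#|Neps T G eps (useq k)|)) (dk tau : R) :
  (0 < n)%N ->
  C1 T -> C1 G ->
  open S ->
  (forall u, S u -> forall psi : 'rV[R]_n,
      (forall i, 0 <= psi 0 i) -> psi != 0 -> 0 < dotv (G u) psi) ->
  0 < eps -> 0 < delta ->
  S (useq 0%N) ->
  (forall m, (m < k)%N ->
     exists (a : 'cV[R]_(#|Neps T G eps (useq m)|)) (d t : R),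
       alg2_step T G S eps delta (useq m) a d t (useq m.+1)) ->
  alg2_step T G S eps delta (useq k) alpha dk tau (useq k.+1) ->
  0 < dk ->
  lam T G (useq k) < lam T G (useq k.+1).
Proof.
move=> n0 [dT _] [dG _] oS Gpos eps0 _ S0 Hprev Hstep dk0.
have Su : S (useq k).
  case: k alpha Hprev Hstep => [|m] // _ Hprev _.
  have [a [d [t]]] := Hprev m (ltnSn m).
  by case=> _ _ _ [_ [St _]] ->.
set u := useq k in Su Hstep *.
move: Hstep; rewrite /alg2_step.
set M := Neps T G eps u.
set A := Amat T G M u.
set Y := (A *m alpha)^T.
set y := (enorm Y)^-1 *: Y.
case=> Hgam _ _ [_ [_ Hmax]] ->.
have Gp : forall i, 0 < G u 0 i.
  move=> i; have := Gpos u Su (delta_mx 0 i).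
  have -> : dotv (G u) (delta_mx 0 i) = G u 0 i.
    rewrite /dotv (bigD1 i) //= big1 ?addr0; first by rewrite mxE !eqxx mulr1.
    by move=> j ji; rewrite mxE (negbTE ji) andbF mulr0.
  apply.
    by move=> j; rewrite mxE; case: (_ && _).
  apply/eqP => /matrixP /(_ 0 i); rewrite !mxE !eqxx /= => /eqP.
  by rewrite oner_eq0.
have dfi : forall i, differentiable (fi T G i) u.
  move=> i.
  have -> : fi T G i = ((fun N : 'rV[R]_n => N 0 i) \o T) *
                       (fun x => (((fun N : 'rV[R]_n => N 0 i) \o G) x)^-1).
    by apply/funext => x.
  apply: differentiableM.
    apply: differentiable_comp => //; exact: differentiable_coord.
  apply: differentiableV; last by rewrite /= gt_eqF.
  apply: differentiable_comp => //; exact: differentiable_coord.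
have HdotY : forall j : 'I_#|M|, dotv Y (grad (fi T G (enum_val j)) u) = dk.
  move=> j; have := congr1 (fun B : 'cV[R]_#|M| => B j 0) Hgam.
  rewrite /Gam -/A -mulmxA !mxE mulr1 => <-.
  rewrite /dotv; apply: eq_bigr => r _; rewrite !mxE mulrC.
  by rewrite /Y ?mxE.
have [i0 Hi0] := @lam_attained R n T G u n0.
have i0M : i0 \in M by rewrite inE -Hi0 subrr.
have Ynz : 0 < dotv Y Y.
  rewrite lt_def; apply/andP; split; last first.
    by rewrite /dotv sumr_ge0 // => r _; rewrite -expr2 sqr_ge0.
  apply/eqP => /eqP; rewrite /dotv psumr_eq0 => [/allP H|r _]; last first.
    by rewrite -expr2 sqr_ge0.
  have Y0 : Y = 0.
    apply/rowP => r; have := H r (mem_index_enum r).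
    by rewrite mulf_eq0 orbb => /eqP ->; rewrite mxE.
  have := HdotY (enum_rank_in i0M i0).
  rewrite Y0 /dotv big1 => [Hd|r _]; last by rewrite mxE mul0r.
  by move: dk0; rewrite -Hd ltxx.
have nY : 0 < enorm Y by rewrite /enorm sqrtr_gt0.
have Dpos : forall i, i \in M -> 0 < 'D_y (fi T G i) u.
  move=> i iM; rewrite deriv_dot // /y.
  have -> : dotv ((enorm Y)^-1 *: Y) (grad (fi T G i) u) =
            (enorm Y)^-1 * dotv Y (grad (fi T G i) u).
    by rewrite /dotv mulr_sumr; apply: eq_bigr => r _; rewrite mxE mulrA.
  have := HdotY (enum_rank_in iM i); rewrite enum_rankK_in // => ->.
  by rewrite mulr_gt0 // invr_gt0.
have Hloc : forall i, \forall h \near nbhs (0:R), 0 < h ->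
    lam T G u < fi T G i (h *: y + u).
  move=> i; case: (boolP (i \in M)) => iM.
    have := cvgr_gt (FF:=dnbhs_filter _) _ (@der R n _ _ _ (diff_derivable (v:=y) (dfi i))) _ (Dpos i iM).
    rewrite near_withinE; apply: filterS => h Hh hpos.
    have := Hh (lt0r_neq0 hpos); rewrite pmulr_rgt0 ?invr_gt0 // subr_gt0.
    by apply: le_lt_trans; apply: lam_le.
  have Hlt : lam T G u < fi T G i u.
    move: iM; rewrite inE -leNgt => H; rewrite -subr_gt0.
    exact: lt_le_trans H.
  have Hc : (fun h : R => fi T G i (h *: y + u)) @ nbhs (0:R) --> fi T G i u.
    exact: (cvg_comp _ _ (@aff R n y u) (differentiable_continuous (dfi i))).
  by apply: filterS (cvgr_gt (FF:=nbhs_filter _) _ Hc _ Hlt) => h Hh _.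
have HS : \forall h \near nbhs (0:R), S (h *: y + u).
  apply: (@aff R n y u); apply: open_nbhs_nbhs; split => //.
have Hall := filter_forall (nbhs_filter (0:R)) Hloc.
have Hr : \forall h \near (0:R)^'+, 0 < h /\ S (h *: y + u) /\
            forall i, lam T G u < fi T G i (h *: y + u).
  rewrite near_withinE; apply: filterS (filterI HS Hall) => h [Sh Hh] hpos.
  by split => //; split => // i; apply: Hh.
have [h [hpos [Sh Hh]]] := filter_ex Hr.
apply: (lt_le_trans (y := lam T G (u + h *: y))).
  by apply: lam_gt => // i; rewrite addrC.
by apply: Hmax; [exact: ltW | rewrite addrC].
Qed.
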